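(* Let $\gamma\in(0,1)$ and $\mu\in(0,\infty)\setminus\{1\}$. Let $g_0:\mathbb{R}\to\mathbb{R}\cup\{-\infty\}$ satisfy $\sup g_0=\gamma$, and let $(p_n,s_n,g_n)_{n\ge1}$ be defined by the dynamics in the context. Then for all $n\ge1$: - $s_n=\sup\{\xi\in\mathbb{R}:\sup_{x\in\mathbb{R}}\Phi_\xi[g_{n-1}](x)\ge\gamma\}$; - $g_n=\pi\circ\Phi_{s_n}[g_{n-1}]$.
   Context: Let $\pi(x)=x$ if $x\ge0$ and $\pi(x)=-\infty$ otherwise (including $x=-\infty$). Write $x_+=\max(x,0)$ and use $\sup\emptyset=-\infty$. Define $\Phi_\xi[h](x)=1-\gamma-\mu(\xi-x)_++\sup_y(h(y)-|x-y|)$. The dynamics is defined for $n\ge1$ by: - $p_n(x)=\pi[1-\gamma+\sup_y(g_{n-1}(y)-\min(1,\mu)(x-y)_+)]$; - $s_n=\sup\{x:p_n(x)\ge\gamma\}$; - $g_n(x)=\pi[1-\gamma+\sup_y(g_{n-1}(y)-|x-y|-\mu(s_n-x)_+)]$. *)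

(* Defs.v *)
From HB Require Import structures.
From mathcomp Require Import all_boot all_order all_algebra.
From mathcomp Require Import all_classical all_reals.
From mathcomp Require Import ereal.
Set Implicit Arguments. Unset Strict Implicit. Unset Printing Implicit Defensive.
Import Order.TTheory GRing.Theory Num.Theory.
Local Open Scope classical_set_scope.
Local Open Scope ring_scope.
Local Open Scope ereal_scope.

Section Defs.
Variable R : realType.

Definition pi_trunc (x : \bar R) : \bar R := if 0 <= x then x else -oo.

Definition Phi (gamma mu : R) (xi : \bar R) (h : R -> \bar R) (x : R) : \bar R :=
  (1 - gamma)%:E - mu%:E * maxe (xi - x%:E) 0
  + ereal_sup [set h y - (`|x - y|)%:E | y in [set: R]].

Definition dynamics (gamma mu : R) (p : nat -> R -> \bar R) (s : nat -> \bar R)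
    (g : nat -> R -> \bar R) : Prop :=
  forall n : nat, (1 <= n)%N ->
    [/\ (forall x : R, p n x = pi_trunc ((1 - gamma)%:E +
           ereal_sup [set g n.-1 y - (Num.min 1 mu * Num.max (x - y) 0)%:E
                     | y in [set: R]])),
        s n = ereal_sup [set x%:E | x in [set x : R | gamma%:E <= p n x]] &
        (forall x : R, g n x = pi_trunc ((1 - gamma)%:E +
           ereal_sup [set g n.-1 y - (`|x - y|)%:E - mu%:E * maxe (s n - x%:E) 0
                     | y in [set: R]]))].

End Defs.

(* Main.v *)
Require Import Defs.
From HB Require Import structures.
From mathcomp Require Import all_boot all_order all_algebra.
From mathcomp Require Import all_classical all_reals.
From mathcomp Require Import ereal.
From mathcomp Require Import lra.
Import Order.TTheory GRing.Theory Num.Theory.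
Local Open Scope classical_set_scope.
Local Open Scope ring_scope.
Local Open Scope ereal_scope.

Lemma F1 (R : realType) (mu xi x y : R) : (0 < mu)%R ->
  (Num.min 1 mu * Num.max (xi - y) 0 <= `|x - y| + mu * Num.max (xi - x) 0)%R.
Proof.
move=> hmu.
case: (leP (1%R : R) mu) => hm; case: (leP (xi - y)%R (0%R:R)) => h1; case: (leP (xi - x)%R (0%R:R)) => h2;
  rewrite ?mulr0 ?addr0 ?mul1r; try (by apply: normr_ge0);
  (case: (leP (0%R:R) (x - y)%R) => h3; [rewrite ger0_norm // | rewrite ltr0_norm //]); nra.
Qed.

Lemma F2 (R : realType) (mu xi y : R) : (0 < mu)%R ->
  exists x : R, (`|x - y| + mu * Num.max (xi - x) 0 <= Num.min 1 mu * Num.max (xi - y) 0)%R.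
Proof.
move=> hmu.
case: (leP (xi - y)%R (0%R:R)) => h1.
  by exists y; rewrite subrr normr0 add0r (max_r h1) !mulr0.
case: (leP (1%R : R) mu) => hm.
  exists xi; rewrite subrr (max_r (lexx _)) mulr0 addr0 ger0_norm; last by lra.
  by rewrite mul1r.
exists y; rewrite subrr normr0 add0r.
by rewrite /Num.max; case: ifPn => _; nra.
Qed.

Lemma Phi_fin (R : realType) (gamma mu xi : R) (h : R -> \bar R) (x : R) :
  Phi gamma mu xi%:E h x = (1 - gamma)%:E - (mu * Num.max (xi - x) 0)%:E
     + ereal_sup [set h y - (`|x - y|)%:E | y in [set: R]].
Proof. by rewrite /Phi -EFinB -EFin_max -EFinM. Qed.

Lemma key (R : realType) (gamma mu xi : R) (h : R -> \bar R) : (0 < mu)%R ->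
  ereal_sup (range (Phi gamma mu xi%:E h)) = (1 - gamma)%:E +
    ereal_sup [set h y - (Num.min 1 mu * Num.max (xi - y) 0)%:E | y in [set: R]].
Proof.
move=> hmu; apply/eqP; rewrite eq_le; apply/andP; split.
  apply: ge_ereal_sup => _ [x _ <-]; rewrite Phi_fin -addeA; apply: leeD2l.
  rewrite addeC leeBlDr //; apply: ge_ereal_sup => _ [y _ <-].
  apply: (@le_trans _ _ (h y - (Num.min 1 mu * Num.max (xi - y) 0)%:E
            + (mu * Num.max (xi - x) 0)%:E)).
    have := @F1 R mu xi x y hmu.
    case: (h y) => [r| |] //= H.
    by rewrite -!EFinB -EFinD lee_fin; lra.
  apply: leeD2r; apply: ereal_sup_ubound; by exists y.
rewrite -leeBrDl //; apply: ge_ereal_sup => _ [y _ <-]; rewrite leeBrDl //.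
have [x Hx] := @F2 R mu xi y hmu.
apply: (@le_trans _ _ (Phi gamma mu xi%:E h x)); last by apply: ereal_sup_ubound; exists x.
rewrite Phi_fin -addeA; apply: leeD2l.
apply: (@le_trans _ _ (- (mu * Num.max (xi - x) 0)%:E + (h y - (`|x - y|)%:E))).
  case: (h y) => [r| |] //=.
  by rewrite -!EFinD lee_fin; lra.
by apply: leeD2l; apply: ereal_sup_ubound; exists y.
Qed.

Lemma pi_ge (R : realType) (gamma : R) (v : \bar R) : (0 < gamma)%R ->
  (gamma%:E <= pi_trunc v) = (gamma%:E <= v).
Proof.
move=> hg; rewrite /pi_trunc; case: ifPn => // hv.
rewrite leeNy_eq; apply/esym/negbTE; rewrite -ltNge.
rewrite -ltNge in hv; apply: (lt_trans hv); by rewrite lte_fin.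
Qed.

Lemma sup_shift (R : realType) (f : R -> \bar R) (c : \bar R) :
  c \is a fin_num \/ c = +oo ->
  ereal_sup [set f y - c | y in [set: R]] = ereal_sup [set f y | y in [set: R]] - c.
Proof.
case=> [hc|->].
  apply/eqP; rewrite eq_le; apply/andP; split.
    apply: ge_ereal_sup => _ [y _ <-]; apply: leeB => //.
    by apply: ereal_sup_ubound; exists y.
  rewrite leeBlDr //; apply: ge_ereal_sup => _ [y _ <-].
  rewrite -leeBlDr //; apply: ereal_sup_ubound; by exists y.
rewrite addeNy; apply/eqP; rewrite eq_le leNye andbT.
apply: ge_ereal_sup => _ [y _ <-]; by rewrite addeNy.
Qed.

Theorem propositionS2p4 (R : realType) (gamma mu : R)
    (p : nat -> R -> \bar R) (s : nat -> \bar R) (g : nat -> R -> \bar R) :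
  (0 < gamma < 1)%R -> (0 < mu)%R -> mu != 1%R ->
  ereal_sup (range (g 0%N)) = gamma%:E ->
  dynamics gamma mu p s g ->
  forall n : nat, (1 <= n)%N ->
    s n = ereal_sup [set xi%:E | xi in
            [set xi : R | gamma%:E <= ereal_sup (range (Phi gamma mu xi%:E (g n.-1)))]]
    /\ (forall x : R, g n x = pi_trunc (Phi gamma mu (s n) (g n.-1) x)).
Proof.
move=> /andP[hg0 hg1] hmu _ _ hdyn n hn.
have [hp hs hgn] := hdyn n hn.
split.
  rewrite hs; congr ereal_sup; congr image; apply/seteqP; split => xi /=;
    by rewrite hp pi_ge // key.
move=> x; rewrite hgn /Phi.
set c := (mu%:E * maxe (s n - x%:E) 0).
have hc : c \is a fin_num \/ c = +oo.
  rewrite /c; case: (s n) => [r| |] /=.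
  - by left; rewrite -EFinB -EFin_max -EFinM.
  - by right; rewrite maxye mulry gtr0_sg // mul1e.
  - by left; rewrite maxNye mule0.
rewrite (@sup_shift R (fun y => g n.-1 y - (`|x - y|)%:E) c hc).
by rewrite addeA addeAC.
Qed.
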